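(* Let $R$ be a ring. The following are equivalent: (1) $R$ is an NCUC ring; (2) every strongly nil-clean element of $R$ is uniquely clean; (3) every idempotent of $R$ is uniquely clean; (4) $R$ is abelian; (5) $R$ is an NCUNC ring.
   Context: All rings are associative with identity $1$. For a ring $R$, $\mathrm{Id}(R)$, $U(R)$, $\mathrm{Nil}(R)$ denote the sets of idempotents, units and nilpotent elements. An element $a\in R$ is uniquely clean if there is exactly one $e\in \mathrm{Id}(R)$ with $a-e\in U(R)$. An element $a$ is nil-clean if $a=e+q$ with $e\in \mathrm{Id}(R)$, $q\in\mathrm{Nil}(R)$, strongly nil-clean if moreover $eq=qe$ can be arranged, and uniquely nil-clean if there is exactly one $e\in\mathrm{Id}(R)$ with $a-e\in\mathrm{Nil}(R)$. $R$ is NCUC if every nil-clean element of $R$ is uniquely clean, and NCUNC if every nil-clean element of $R$ is uniquely nil-clean. $R$ is abelian if all its idempotents are central. *)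

(* Defs.v *)
From HB Require Import structures.
From mathcomp Require Import all_boot all_order all_algebra.
Set Implicit Arguments. Unset Strict Implicit. Unset Printing Implicit Defensive.
Import GRing.Theory.
Local Open Scope ring_scope.

Section Defs.
Variable R : pzRingType.

Definition idem (e : R) : Prop := e * e = e.
Definition unitP (u : R) : Prop := exists v : R, u * v = 1 /\ v * u = 1.
Definition nilp (q : R) : Prop := exists n : nat, q ^+ n = 0.

Definition uniquely_clean (a : R) : Prop := exists! e : R, idem e /\ unitP (a - e).
Definition nil_clean (a : R) : Prop := exists e q : R, [/\ idem e, nilp q & a = e + q].
Definition strongly_nil_clean (a : R) : Prop :=
  exists e q : R, [/\ idem e, nilp q, e * q = q * e & a = e + q].
Definition uniquely_nil_clean (a : R) : Prop := exists! e : R, idem e /\ nilp (a - e).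

Definition NCUC : Prop := forall a : R, nil_clean a -> uniquely_clean a.
Definition NCUNC : Prop := forall a : R, nil_clean a -> uniquely_nil_clean a.
Definition abelian_ring : Prop := forall e : R, idem e -> forall x : R, e * x = x * e.
End Defs.

(* Main.v *)
Require Import Defs.
From mathcomp Require Import all_boot all_order all_algebra.
Local Open Scope ring_scope.
Import GRing.Theory.
Set Implicit Arguments. Unset Strict Implicit.

Section Aux.
Variable R : pzRingType.
Implicit Types (e g n q u a x : R).

Lemma nil_unit n : Defs.nilp n -> unitP (1 - n).
Proof.
case=> k hk; set S := \sum_(i < k) n ^+ i.
have h1 : (n - 1) * S = -1 by rewrite /S -subrX1 hk sub0r.
have hc : GRing.comm (n - 1) S.
  apply: commr_sum => i _; apply: commrX; apply: commr_sym.
  apply: commrB; [exact: commr_refl | exact: commr1].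
exists S; split; first by rewrite -opprB mulNr h1 opprK.
by rewrite -opprB mulrN -hc h1 opprK.
Qed.

Lemma unit_mul a b : unitP a -> unitP b -> unitP (a * b).
Proof.
case=> a' [ha1 ha2] [b' [hb1 hb2]]; exists (b' * a'); split.
  by rewrite mulrA -(mulrA a) hb1 mulr1.
by rewrite mulrA -(mulrA b') ha2 mulr1.
Qed.

Lemma unit_addnil u q : GRing.comm u q -> unitP u -> Defs.nilp q -> unitP (u + q).
Proof.
move=> cuq [v [h1 h2]] [k hk].
have cvq : GRing.comm v q.
  rewrite /GRing.comm -[v * q]mulr1 -h1 !mulrA -(mulrA v q u) -cuq.
  by rewrite mulrA h2 mul1r.
have -> : u + q = u * (1 - (- (v * q))).
  by rewrite opprK mulrDr mulr1 mulrA h1 mul1r.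
apply: unit_mul; first by exists v.
apply: nil_unit; exists k.
rewrite -mulN1r exprMn_comm; last by apply: commr_sym; exact: commrN1.
by rewrite exprMn_comm // hk !mulr0.
Qed.

Lemma idemC e : idem e -> idem (1 - e).
Proof. by rewrite /idem mulrBl mul1r mulrBr mulr1 => ->; rewrite subrr subr0. Qed.

Lemma idem_s e : idem e -> unitP (e - (1 - e)).
Proof.
move=> he; exists (e - (1 - e)).
have h : (e - (1 - e)) * (e - (1 - e)) = 1.
  have e1 : e * (1 - e) = 0 by rewrite mulrBr mulr1 he subrr.
  have e2 : (1 - e) * e = 0 by rewrite mulrBl mul1r he subrr.
  rewrite mulrBl mulrBr he e1 mulrBr e2 (idemC he : (1 - e) * (1 - e) = 1 - e) subr0 sub0r opprK.
  by rewrite addrC subrK.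
by split.
Qed.

Lemma idem_pert e n : idem e -> n * n = 0 ->
  (e * n = n /\ n * e = 0) \/ (e * n = 0 /\ n * e = n) ->
  idem (e + n) /\ unitP (e - (1 - (e + n))).
Proof.
move=> he hn hs; split.
  rewrite /idem mulrDl !mulrDr he hn addr0.
  by case: hs => [[-> ->]|[-> ->]]; rewrite ?addr0 ?add0r.
have -> : e - (1 - (e + n)) = (e - (1 - e)) + n.
  by rewrite !opprB (addrAC e n) addrA.
have hu : unitP (1 + n).
  by rewrite -[n]opprK; apply: nil_unit; exists 2%N; rewrite expr2 mulrNN hn.
case: hs => [[h1 h2]|[h1 h2]].
  have -> : (e - (1 - e)) + n = (e - (1 - e)) * (1 + n).
    by rewrite mulrDr mulr1 mulrBl h1 mulrBl mul1r h1 subrr subr0.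
  exact: unit_mul (idem_s he) hu.
have -> : (e - (1 - e)) + n = (1 + n) * (e - (1 - e)).
  by rewrite mulrDl mul1r mulrBr h2 mulrBr mulr1 h2 subrr subr0 addrC.
exact: unit_mul hu (idem_s he).
Qed.

Lemma abel_clean e q h : abelian_ring R -> idem e -> Defs.nilp q -> idem h ->
  unitP (e + q - h) -> h = 1 - e.
Proof.
move=> H he hq hh hu.
have ceq : GRing.comm e q := H e he q.
have chq : GRing.comm h q := H h hh q.
have che : GRing.comm h e := H h hh e.
have [w [_ hw]] : unitP (e - h).
  have -> : e - h = (e + q - h) + - q by rewrite addrAC addrK.
  apply: unit_addnil => //; last by case: hq => k hk; exists k;
    rewrite -mulN1r exprMn_comm ?hk ?mulr0 //; apply: commr_sym; exact: commrN1.
  apply: commrN; apply: commr_sym; apply: commrB; last exact: commr_sym.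
  apply: commrD; first exact: commr_sym. exact: commr_refl.
have heh : e * h = 0.
  have t : (e - h) * (e * h) = 0.
    by rewrite mulrBl mulrA he mulrA (che : h * e = e * h) -mulrA hh subrr.
  by rewrite -[e * h]mul1r -hw -mulrA t mulr0.
have hhe : h * e = 0 by rewrite (che : h * e = e * h).
have : w * ((e - h) * (1 - e - h)) = 0.
  by rewrite mulrBl !mulrBr !mulr1 he heh hhe hh !mulr0 !oppr0 !addr0 !subrr.
rewrite mulrA hw mul1r => /eqP; rewrite subr_eq0 => /eqP ->.
by [].
Qed.

End Aux.

Theorem theorem3p5 (R : pzRingType) :
  [<-> NCUC R;
       (forall a : R, strongly_nil_clean a -> uniquely_clean a);
       (forall e : R, idem e -> uniquely_clean e);
       abelian_ring R;
       NCUNC R].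
Proof.
have H41 : abelian_ring R -> NCUC R.
  move=> H a [e [q [he hq ->]]]; exists (1 - e); split.
    split; first exact: idemC.
    have -> : e + q - (1 - e) = (e - (1 - e)) + q by rewrite addrAC.
    apply: (unit_addnil _ (idem_s he) hq).
    apply: commr_sym; apply: commrB; first exact: commr_sym (H e he q).
    apply: commrB; [exact: commr1 | exact: commr_sym (H e he q)].
  by move=> h [hh hu]; apply: esym; apply: (abel_clean H he hq hh hu).
have key : forall e : R, idem e -> forall x : R,
    (forall n : R, n * n = 0 ->
      (e * n = n /\ n * e = 0) \/ (e * n = 0 /\ n * e = n) -> n = 0) ->
    e * x = x * e.
  move=> e he x Hn.
  have e1 : e * (1 - e) = 0 by rewrite mulrBr mulr1 he subrr.
  have e2 : (1 - e) * e = 0 by rewrite mulrBl mul1r he subrr.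
  have A : e * x * (1 - e) = 0.
    apply: Hn; first by rewrite !mulrA -(mulrA (e * x) (1 - e) e) e2 mulr0 !mul0r.
    left; split; first by rewrite !mulrA he.
    by rewrite -mulrA e2 mulr0.
  have B : (1 - e) * x * e = 0.
    apply: Hn; first by rewrite !mulrA -(mulrA ((1 - e) * x) e (1 - e)) e1 mulr0 !mul0r.
    right; split; first by rewrite !mulrA e1 !mul0r.
    by rewrite -(mulrA ((1 - e) * x) e e) he.
  move: A; rewrite mulrBr mulr1 => /eqP; rewrite subr_eq0 => /eqP ->.
  move: B; rewrite mulrBl mul1r mulrBl => /eqP; rewrite subr_eq0 => /eqP ->.
  by [].
have H54 : NCUNC R -> abelian_ring R.
  move=> H e he x; apply: key => // n hn hs.
  have [hf _] := idem_pert he hn hs.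
  have [e0 [_ U]] : uniquely_nil_clean (e : R).
    by apply: H; exists e, 0; split => //; [exists 1%N; rewrite expr1 | rewrite addr0].
  have a1 := U e (conj he (ex_intro _ 1%N (eq_ind_r _ (subrr e) (expr1 _)))).
  have a2 : e0 = e + n.
    apply: U; split => //; exists 2%N; rewrite opprD addrA subrr sub0r expr2 mulrNN //.
  by move: a2; rewrite a1 => /eqP; rewrite -subr_eq0 opprD addrA subrr sub0r oppr_eq0 => /eqP.
tfae.
- by move=> H a [e [q [he hq _ ->]]]; apply: H; exists e, q.
- move=> H e he; apply: H; exists e, 0; split => //; first by exists 1%N; rewrite expr1.
  by rewrite mulr0 mul0r. by rewrite addr0.
- move=> H e he x; apply: key => // n hn hs.
  have [hf hu] := idem_pert he hn hs.
  have [g [_ U]] := H e he.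
  have a1 := U _ (conj (idemC he) (idem_s he)).
  have a2 := U _ (conj (idemC hf) hu).
  have Z : (1 - e) - (1 - (e + n)) = n.
    by rewrite opprB addrC -!addrA addKr addrC subrK.
  by rewrite -Z -a1 -a2 subrr.
- move=> H a [e [q [he hq ->]]]; exists e; split.
    by split => //; rewrite (addrC e q) addrK.
  move=> g [hg hn].
  have hu : unitP (e + q - (1 - g)).
    have -> : e + q - (1 - g) = (g - (1 - g)) + (e + q - g).
      by rewrite [RHS]addrC addrA subrK.
    apply: (unit_addnil _ (idem_s hg) hn).
    move: (e + q - g) => y.
    rewrite /GRing.comm mulrBl mulrBr mulrBl mulrBr mul1r mulr1.
    by rewrite (H g hg).
  have := abel_clean H he hq (idemC hg) hu.
  by move/(congr1 (fun t => 1 - t)); rewrite !subKr => <-.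
- by move=> H; apply: H41; apply: H54.
Qed.
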